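(* Let $n$ and $s$ be positive integers. Let $f$ be a nonzero $n$-variable Boolean function with $\deg(f)\ge s-1$, and let $D\subseteq\mathbb{F}_2^n$ be its support. Then ${FAI}(f)\ge s$ if and only if $$\mathrm{RM}(e,n)^{\overline{D}}\cap\left(\mathrm{RM}(e+n-s,n)^{\overline{D}}\right)^{\perp}=\{\mathbf 0\}$$ holds for every integer $e$ with $1\le e\le n$.
   Context: An $n$-variable Boolean function is a map $\mathbb{F}_2^n\to\mathbb{F}_2$; its algebraic degree $\deg$ is the degree of its algebraic normal form (its unique representation as a multilinear polynomial over $\mathbb{F}_2$). The support of $f$ is $\{x: f(x)=1\}$ and $wt(f)$ is its size. ${AN}^c(f)$ denotes the set of $n$-variable Boolean functions $g$ with $f\cdot g\neq 0$ (pointwise product). The fast algebraic immunity ${FAI}(f)$ is the minimum of $\deg(g)+\deg(f\cdot g)$ over all $g\in{AN}^c(f)$ with $g\neq 1$. For an integer $r$, the Reed–Muller code $\mathrm{RM}(r,n)\subseteq\mathbb{F}_2^{\mathbb{F}_2^n}$ is the set of value vectors $(h(x))_{x\in\mathbb{F}_2^n}$ of $n$-variable Boolean functions $h$ with $\deg(h)\le r$ (so for $r\ge n$ it is the whole space). For a code $\mathcal C$ with coordinates indexed by a set $X$ and a subset $E\subseteq X$, the punctured code $\mathcal C^{E}$ is obtained by deleting the coordinates in $E$ from every codeword; $\overline{D}=\mathbb{F}_2^n\setminus D$, so $\mathrm{RM}(r,n)^{\overline D}=\{(h(x))_{x\in D}:\deg h\le r\}\subseteq\mathbb{F}_2^{D}$.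 The dual $\mathcal C^\perp$ is with respect to the standard (Euclidean) inner product on $\mathbb{F}_2^{D}$. *)

(* Defs.v *)
From mathcomp Require Import all_boot all_algebra.
Set Implicit Arguments. Unset Strict Implicit. Unset Printing Implicit Defensive.
Import GRing.Theory.
Local Open Scope ring_scope.

Definition pt (n : nat) := 'rV['F_2]_n.
Definition BF (n : nat) := {ffun pt n -> 'F_2}.

Definition bf0 (n : nat) : BF n := [ffun _ => 0].
Definition bf1 (n : nat) : BF n := [ffun _ => 1].

Definition bfmul (n : nat) (f g : BF n) : BF n := [ffun x => f x * g x].

(* Evaluation of a multilinear polynomial over F_2 given by its set S of
   monomials (a monomial is the set of variables it contains). *)
Definition anf_eval (n : nat) (S : {set {set 'I_n}}) : BF n :=
  [ffun x : pt n => \sum_(u in S) \prod_(i in u) x ord0 i].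

(* Since the ANF is
   unique, the outer max ranges over exactly one S.  deg 0 = 0 here; the
   convention deg 0 = -oo is handled explicitly in RM below. *)
Definition deg (n : nat) (f : BF n) : nat :=
  \max_(S : {set {set 'I_n}} | anf_eval S == f) \max_(u in S) #|u|.

Definition supp (n : nat) (f : BF n) : {set pt n} := [set x | f x != 0].

(* Fast algebraic immunity: min of deg g + deg (f g) over g with f g <> 0,
   g <> 1.  (The default value 2n for an empty range is never used when
   f <> 0 and n > 0, since deg g + deg (f g) <= 2n anyway.) *)
Definition FAI (n : nat) (f : BF n) : nat :=
  \big[minn/(2 * n)%N]_(g : BF n | (bfmul f g != bf0 n) && (g != bf1 n))
     (deg g + deg (bfmul f g))%N.

Definition word (n : nat) (D : {set pt n}) := {ffun {x : pt n | x \in D} -> 'F_2}.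

Definition word0 (n : nat) (D : {set pt n}) : word D := [ffun _ => 0].

Definition puncture (n : nat) (D : {set pt n}) (h : BF n) : word D :=
  [ffun x => h (val x)].

(* Reed-Muller code RM(r,n), r an integer; deg 0 = -oo so RM(r,n) = {0}
   for r < 0. *)
Definition RM (n : nat) (r : int) : {set BF n} :=
  [set h : BF n | (h == bf0 n) || ((deg h)%:Z <= r)].

(* Punctured code RM(r,n)^{complement of D} *)
Definition RMp (n : nat) (r : int) (D : {set pt n}) : {set word D} :=
  [set puncture D h | h in RM n r].

Definition dotw (n : nat) (D : {set pt n}) (c d : word D) : 'F_2 :=
  \sum_(x : {x : pt n | x \in D}) c x * d x.

Definition dual (n : nat) (D : {set pt n}) (C : {set word D}) : {set word D} :=
  [set c : word D | [forall d in C, dotw c d == 0]].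

(* Main.v *)
Require Import Defs.
From mathcomp Require Import all_boot all_algebra.
From mathcomp Require Import all_order zify.
Set Implicit Arguments. Unset Strict Implicit. Unset Printing Implicit Defensive.
Import Order.TTheory GRing.Theory Num.Theory.
Local Open Scope ring_scope.

Lemma F2_cases (a : 'F_2) : a = 0 \/ a = 1.
Proof. case: a => [[|[|//]]] Ha; [left|right]; exact: val_inj. Qed.

Lemma F2_addxx (a : 'F_2) : a + a = 0.
Proof. by case: (F2_cases a) => ->; [rewrite addr0 | apply/eqP]. Qed.

Lemma F2_10 : (1 : 'F_2) != 0. Proof. by []. Qed.

Lemma F2_neq0 (a : 'F_2) : a != 0 -> a = 1.
Proof. by case: (F2_cases a) => [->|->]. Qed.

Lemma F2_neq1 (a : 'F_2) : a != 1 -> a = 0.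
Proof. by case: (F2_cases a) => [->|->]. Qed.

Section S.
Variable n : nat.
Implicit Types (f g h : BF n) (S T : {set {set 'I_n}}) (x : pt n).

Definition mono (u : {set 'I_n}) (x : pt n) : 'F_2 := \prod_(i in u) x ord0 i.
Definition spt (x : pt n) : {set 'I_n} := [set i | x ord0 i == 1].

Lemma monoE u x : mono u x = (u \subset spt x)%:R.
Proof.
case: (boolP (u \subset spt x)) => H.
  rewrite /mono big1 // => i iu; move/subsetP: H => /(_ i iu); rewrite inE.
  by move/eqP.
have [i iu ix] : exists2 i, i \in u & i \notin spt x.
  by apply/exists_inP; rewrite -negb_forall_in; apply: contra H => /forall_inP H; apply/subsetP.
rewrite /mono (bigD1 i) //= ; move: ix; rewrite inE => /F2_neq1 ->; by rewrite mul0r.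
Qed.

Lemma monoU u v x : mono u x * mono v x = mono (u :|: v) x.
Proof. by rewrite !monoE subUset; case: (u \subset _); case: (v \subset _); rewrite ?mulr1 ?mulr0. Qed.

Lemma anf_evalE (S : {set {set 'I_n}}) x : anf_eval S x = \sum_(u in S) mono u x.
Proof. by rewrite ffunE. Qed.

Definition sd (S T : {set {set 'I_n}}) := (S :\: T) :|: (T :\: S).

Lemma sum_sd (F : {set 'I_n} -> 'F_2) S T :
  \sum_(u in sd S T) F u = \sum_(u in S) F u + \sum_(u in T) F u.
Proof.
rewrite (big_mkcond (mem (sd S T))) (big_mkcond (mem S)) (big_mkcond (mem T)) -big_split /=.
apply: eq_bigr => u _; rewrite !inE.
by case: (u \in S); case: (u \in T); rewrite /= ?addr0 ?add0r ?F2_addxx.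
Qed.

Lemma anf_eval_sd (S T : {set {set 'I_n}}) x : anf_eval (sd S T) x = anf_eval S x + anf_eval T x.
Proof. by rewrite !anf_evalE sum_sd. Qed.

Definition ind (u : {set 'I_n}) : pt n := \row_i (i \in u)%:R.

Lemma spt_ind u : spt (ind u) = u.
Proof. by apply/setP => i; rewrite inE mxE; case: (i \in u). Qed.

Lemma anf_eval0 (S : {set {set 'I_n}}) : (forall x, anf_eval S x = 0) -> S = set0.
Proof.
move=> H; apply/eqP; apply/negPn/negP => /set0Pn [u0 u0S].
pose u := [arg min_(v < u0 in S) #|v|].
have [uS umin] : u \in S /\ forall v, v \in S -> (#|u| <= #|v|)%N.
  by rewrite /u; case: arg_minnP.
move: (H (ind u)); rewrite anf_evalE (bigD1 u) //= big1 ?addr0.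
  by rewrite monoE spt_ind subxx.
move=> v /andP [vS vu]; rewrite monoE spt_ind.
case: (boolP (v \subset u)) => // vsub.
have : v \proper u by rewrite properEneq vu vsub.
move/proper_card => lt; have := leq_ltn_trans (umin v vS) lt; by rewrite ltnn.
Qed.

Lemma anf_eval_inj : injective (@anf_eval n).
Proof.
move=> S T ST.
have : sd S T = set0.
  apply: anf_eval0 => x; rewrite anf_eval_sd ST; exact: F2_addxx.
move/eqP; rewrite setU_eq0 !setD_eq0 => /andP [h1 h2].
by apply/eqP; rewrite eqEsubset h1 h2.
Qed.

Lemma card_pt : #|{: pt n}| = (2 ^ n)%N.
Proof. by rewrite card_mx card_Fp // mul1n. Qed.

Lemma anf_eval_bij : bijective (@anf_eval n).
Proof.
apply: inj_card_bij; first exact: anf_eval_inj.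
have cs : #|{: {set 'I_n}}| = (2 ^ n)%N.
  by rewrite -cardsT -powersetT card_powerset cardsT card_ord.
rewrite card_ffun card_Fp // card_pt; apply: eq_leq.
rewrite -cardsT -powersetT card_powerset cardsT -cs.
by apply: congr1; apply: eq_card.
Qed.


Definition anf (f : BF n) : {set {set 'I_n}} := odflt set0 [pick S | anf_eval S == f].

Lemma anfK f : anf_eval (anf f) = f.
Proof.
rewrite /anf; case: pickP => [S /eqP //|H].
have [g _ gK] := anf_eval_bij.
by move: (H (g f)); rewrite gK eqxx.
Qed.

Lemma anf_uniq S f : anf_eval S = f -> anf f = S.
Proof. by move=> Sf; apply: anf_eval_inj; rewrite anfK Sf. Qed.

Lemma degE f : deg f = \max_(u in anf f) #|u|.
Proof.
rewrite /deg (big_pred1 (anf f)) // => S /=.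
apply/eqP/eqP => [/anf_uniq -> //| ->]; exact: anfK.
Qed.

Lemma deg_le S f d : anf_eval S = f -> (forall u, u \in S -> (#|u| <= d)%N) -> (deg f <= d)%N.
Proof. by move=> /anf_uniq Sf H; rewrite degE Sf; apply/bigmax_leqP. Qed.

Lemma deg_ge f u : u \in anf f -> (#|u| <= deg f)%N.
Proof. by move=> uS; rewrite degE (leq_bigmax_cond _ uS). Qed.

Lemma deg_max f : (deg f <= n)%N.
Proof. by rewrite degE; apply/bigmax_leqP => u _; apply: leq_trans (max_card _) _; rewrite card_ord. Qed.

Lemma anf_eval_set0 x : anf_eval set0 x = 0.
Proof. by rewrite anf_evalE big_set0. Qed.

Lemma anf_eval_set1 w x : anf_eval [set w] x = mono w x.
Proof. by rewrite anf_evalE big_set1. Qed.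

Lemma deg_mul g h : (deg (bfmul g h) <= deg g + deg h)%N.
Proof.
pose R := \big[sd/set0]_(u in anf g) \big[sd/set0]_(v in anf h) [set u :|: v].
apply: (@deg_le R).
  apply/ffunP => x; rewrite [RHS]ffunE.
  rewrite /R (big_morph (fun R => anf_eval R x) (fun S T => anf_eval_sd S T x) (anf_eval_set0 x)).
  rewrite -{2}(anfK g) -{2}(anfK h) !anf_evalE mulr_suml; apply: eq_bigr => u _.
  rewrite (big_morph (fun R => anf_eval R x) (fun S T => anf_eval_sd S T x) (anf_eval_set0 x)).
  rewrite mulr_sumr; apply: eq_bigr => v _.
  by rewrite anf_eval_set1 monoU.
unfold R; apply: (big_ind (fun X : {set {set 'I_n}} => forall w, w \in X -> (#|w| <= deg g + deg h)%N)).
- by move=> w; rewrite inE.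
- move=> X Y HX HY w; rewrite !inE => /orP [/andP [_ /HX] | /andP [_ /HY]] //.
move=> u uS; apply: (big_ind (fun X : {set {set 'I_n}} => forall w, w \in X -> (#|w| <= deg g + deg h)%N)).
- by move=> w; rewrite inE.
- move=> X Y HX HY w; rewrite !inE => /orP [/andP [_ /HX] | /andP [_ /HY]] //.
move=> v vT w; rewrite inE => /eqP ->.
apply: leq_trans (leq_card_setU u v) _.
by apply: leq_add; apply: deg_ge.
Qed.

Lemma deg0_const g : deg g = 0%N -> g = bf0 n \/ g = bf1 n.
Proof.
move=> d0.
have E : forall x, g x = \sum_(u in anf g) (1 : 'F_2).
  move=> x; rewrite -{1}(anfK g) anf_evalE; apply: eq_bigr => u uS.
  have := deg_ge uS; rewrite d0 leqn0 => /eqP /cards0_eq ->.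
  by rewrite /mono big_set0.
case: (F2_cases (\sum_(u in anf g) (1 : 'F_2))) => H; [left|right];
  by apply/ffunP => x; rewrite E H ffunE.
Qed.

Definition ones : pt n := \row_i 1.

Lemma sum_mono u : \sum_(x : pt n) mono u x = (u == setT)%:R.
Proof.
case: (eqVneq u setT) => [->|uT].
  rewrite (bigD1 ones) //= big1 ?addr0.
    rewrite monoE.

    by have -> : [set: 'I_n] \subset spt ones by apply/subsetP => i _; rewrite inE mxE.
  move=> x xo; rewrite monoE.
  case: (boolP (setT \subset spt x)) => // /subsetP H.
  case/eqP: xo; apply/rowP => i; rewrite mxE.
  by have := H i (in_setT i); rewrite inE => /eqP.
have [i iu] : exists i, i \notin u.
  apply/existsP; rewrite -negb_forall; apply: contra uT => /forallP H.
  by rewrite eqEsubset subsetT; apply/subsetP => j _; apply: H.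
pose fl (x : pt n) : pt n := \row_j (if j == i then x ord0 j + 1 else x ord0 j).
have flK : involutive fl.
  move=> x; apply/rowP => j; rewrite !mxE.
  by case: (j == i); rewrite // -addrA F2_addxx addr0.
have flm : forall x, mono u (fl x) = mono u x.
  move=> x; apply: eq_bigr => j ju; rewrite mxE.
  case: eqP => // eji; by move: iu; rewrite -eji ju.
rewrite (bigID (fun x : pt n => x ord0 i == 0)) /=.
rewrite [X in _ + X](reindex_inj (inv_inj flK)) /=.
rewrite [X in _ + X](eq_bigl (fun x : pt n => x ord0 i == 0)); last first.
  move=> x; rewrite mxE eqxx.
  by case: (F2_cases (x ord0 i)) => ->.
rewrite [X in _ + X](eq_bigr (fun x => mono u x)); last by move=> x _; apply: flm.
by rewrite F2_addxx.
Qed.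

Lemma sum_low G : (deg G < n)%N -> \sum_(x : pt n) G x = 0.
Proof.
move=> dG.
rewrite (eq_bigr (fun x => \sum_(u in anf G) mono u x)); last first.
  by move=> x _; rewrite -{1}(anfK G) anf_evalE.
rewrite exchange_big /= big1 // => u uS.
rewrite sum_mono; case: eqP => // uT.
have := deg_ge uS; rewrite uT cardsT card_ord => H.
by have := leq_ltn_trans H dG; rewrite ltnn.
Qed.

Lemma sum_mul_mono S w :
  \sum_(x : pt n) anf_eval S x * mono w x = \sum_(v in S) ((v :|: w) == setT)%:R.
Proof.
rewrite (eq_bigr (fun x => \sum_(v in S) mono (v :|: w) x)); last first.
  by move=> x _; rewrite anf_evalE mulr_suml; apply: eq_bigr => v _; rewrite monoU.
by rewrite exchange_big /=; apply: eq_bigr => v _; rewrite sum_mono.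
Qed.

Lemma dualityP (F : BF n) (r : int) :
  (forall h, h \in RM n r -> \sum_(x : pt n) F x * h x = 0) <->
  (F = bf0 n \/ ((deg F)%:Z + r < n%:Z)%R).
Proof.
split => [H | [-> | lt] h].
- case: (eqVneq F (bf0 n)) => [-> | F0]; [by left | right].
  rewrite ltNge; apply/negP => Hc.
  have nz : (0 < #|anf F|)%N.
    rewrite card_gt0; apply: contra F0 => /eqP A0.
    by apply/eqP/ffunP => x; rewrite -(anfK F) A0 anf_eval_set0 ffunE.
  have [u uS du] := eq_bigmax_cond (fun u : {set 'I_n} => #|u|) nz.
  rewrite -degE in du.
  pose h := anf_eval [set ~: u].
  have hR : h \in RM n r.
    rewrite inE; apply/orP; right.
    have H1 : (deg h <= #|~: u|)%N.
      by apply: (@deg_le [set ~: u]) => // v; rewrite inE => /eqP ->.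
    have : (#|~: u| = n - #|u|)%N by rewrite cardsCs setCK card_ord.
    move=> E; rewrite E in H1.
    move: Hc (deg_max F); rewrite du; move: H1 (deg_max (anf_eval [set ~: u])); rewrite -/h.
    move: (deg h) (#|u|) => a b; lia.
  move: (H h hR); apply/eqP.
  rewrite (eq_bigr (fun x => anf_eval (anf F) x * mono (~: u) x)); last first.
    by move=> x _; rewrite anfK /h anf_eval_set1.
  rewrite sum_mul_mono (bigD1 u) //= setUCr eqxx big1 ?addr0 //.
  move=> v /andP [vS vu]; case: eqP => // vT.
  have : u \subset v.
    apply/subsetP => i iu.
    have : i \in v :|: ~: u by rewrite vT in_setT.
    by rewrite !inE iu orbF.
  move=> uv; have := deg_ge vS; rewrite du => cv.
  have : v == u by rewrite eq_sym eqEcard uv cv.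
  by rewrite (negbTE vu).
- by move=> _; rewrite big1 // => x _; rewrite ffunE mul0r.
- rewrite inE => /orP [/eqP -> | dh].
    by rewrite big1 // => x _; rewrite ffunE mulr0.
  rewrite (eq_bigr (fun x => bfmul F h x)); last by move=> x _; rewrite ffunE.
  apply: sum_low.
  have := deg_mul F h; move: lt dh; move: (deg (bfmul F h)) (deg F) (deg h) => a b c.
  lia.
Qed.

End S.

Lemma bigmin_le_seq (I : eqType) (r : seq I) (P : pred I) (F : I -> nat) m i :
  i \in r -> P i -> (\big[minn/m]_(j <- r | P j) F j <= F i)%N.
Proof.
elim: r => [|a r IH] //; rewrite inE big_cons => /orP [/eqP ->|ir] Pi.
  by rewrite Pi geq_minl.
case: (P a); last exact: IH.
exact: leq_trans (geq_minr _ _) (IH ir Pi).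
Qed.

Lemma bigmin_le_idx (I : eqType) (r : seq I) (P : pred I) (F : I -> nat) m :
  (\big[minn/m]_(j <- r | P j) F j <= m)%N.
Proof.
elim: r => [|a r IH]; first by rewrite big_nil.
rewrite big_cons; case: (P a) => //; exact: leq_trans (geq_minr _ _) IH.
Qed.

Lemma le_bigmin (I : finType) (P : pred I) (F : I -> nat) m s :
  (s <= \big[minn/m]_(i | P i) F i)%N <-> (s <= m)%N /\ (forall i, P i -> (s <= F i)%N).
Proof.
split.
- move=> H; split; last first.
    move=> i Pi; apply: leq_trans H _; exact: bigmin_le_seq (mem_index_enum i) Pi.
  apply: leq_trans H _; exact: bigmin_le_idx.
- case=> Hm HF; apply: (big_ind (fun x => s <= x)%N) => //.
  by move=> x y Hx Hy; rewrite leq_min Hx Hy.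
Qed.

Section Main.
Variables (n : nat) (f : BF n).
Let D := supp f.

Lemma f_onD x : f x = (x \in D)%:R.
Proof. by rewrite /D /supp inE; case: (F2_cases (f x)) => ->. Qed.

Lemma dotwE g h :
  dotw (puncture D g) (puncture D h) = \sum_(x : pt n) bfmul f g x * h x.
Proof.
rewrite /dotw.
rewrite (eq_bigr (fun y : {x in D} => g (val y) * h (val y))); last by move=> y _; rewrite !ffunE.
rewrite -(big_sub D (fun x => g x * h x)) big_mkcond /=.
apply: eq_bigr => x _; rewrite ffunE f_onD.
by case: (x \in D); rewrite ?mul1r ?mul0r.
Qed.

Lemma punct0 g : (puncture D g == word0 D) = (bfmul f g == bf0 n).
Proof.
apply/eqP/eqP => H.
- apply/ffunP => x; rewrite !ffunE f_onD.
  case: (boolP (x \in D)) => xD; rewrite ?mul0r // mul1r.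
  by have := congr1 (fun w : word D => w (exist _ x xD)) H; rewrite !ffunE.
- apply/ffunP => y; rewrite !ffunE.
  have := congr1 (fun w : BF n => w (val y)) H; rewrite !ffunE f_onD (valP y) mul1r //.
Qed.

Lemma dual_punct g (r : int) :
  (puncture D g \in dual (RMp r D)) <->
  (forall h, h \in RM n r -> \sum_(x : pt n) bfmul f g x * h x = 0).
Proof.
rewrite inE; split.
- move/forall_inP => H h hR; apply/eqP; rewrite -dotwE; apply: H.
  exact: imset_f.
- move=> H; apply/forall_inP => d /imsetP [h hR ->]; rewrite dotwE H //.
Qed.

Lemma word0_in (r : int) : word0 D \in RMp r D.
Proof.
have -> : word0 D = puncture D (bf0 n) by apply/ffunP => y; rewrite !ffunE.
by apply: imset_f; rewrite inE eqxx.
Qed.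

Lemma key (e r : int) :
  (RMp e D :&: dual (RMp r D) = [set word0 D]) <->
  (forall g, g \in RM n e -> bfmul f g != bf0 n ->
     (n%:Z <= (deg (bfmul f g))%:Z + r)%R).
Proof.
split.
- move=> H g gR fg0; rewrite leNgt; apply/negP => lt.
  have : puncture D g \in RMp e D :&: dual (RMp r D).
    rewrite inE; apply/andP; split; first exact: imset_f.
    by apply/dual_punct/dualityP; right.
  by rewrite H inE punct0 (negbTE fg0).
- move=> H; apply/setP => w; rewrite inE in_set1.
  apply/andP/eqP.
  + case=> /imsetP [g gR ->] /dual_punct /dualityP [fg0 | lt].
      by apply/eqP; rewrite punct0 fg0.
    case: (eqVneq (bfmul f g) (bf0 n)) => [fg0 | fg0]; first by apply/eqP; rewrite punct0 fg0.
    by have := H g gR fg0; rewrite leNgt lt.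
  + move=> ->; split; first exact: word0_in.
    rewrite inE; apply/forall_inP => d _; rewrite /dotw big1 // => y _; rewrite ffunE mul0r.
    by [].
Qed.

End Main.

Theorem theorem2 (n s : nat) (f : BF n) :
  (0 < n)%N -> (0 < s)%N -> f != bf0 n -> (s.-1 <= deg f)%N ->
  ((s <= FAI f)%N <->
   (forall e : nat, (1 <= e <= n)%N ->
      RMp e%:Z (supp f) :&: dual (RMp (e%:Z + n%:Z - s%:Z) (supp f))
        = [set word0 (supp f)])).
Proof.
move=> n0 s0 f0 sf.
rewrite /FAI le_bigmin.
have fg_g0 : forall g, bfmul f g != bf0 n -> g != bf0 n.
  move=> g; apply: contra => /eqP ->; apply/eqP/ffunP => x; rewrite !ffunE mulr0.
  by [].
split.
- case=> H2n H e /andP [e1 en]; apply/key => g gR fg0.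
  case: (eqVneq g (bf1 n)) => [g1 | g1].
    have : bfmul f g = f by apply/ffunP => x; rewrite ffunE g1 ffunE mulr1.
    move=> ->; move: sf s0 e1; move: (deg f) => a; lia.
  have := H g; rewrite fg0 g1 => /(_ isT).
  move: gR; rewrite inE (negbTE (fg_g0 _ fg0)) /=.
  move: (deg g) (deg (bfmul f g)) => a b; lia.
- move=> H; split.
    by move: sf s0 n0 (deg_max f); move: (deg f) => a; lia.
  move=> g /andP [fg0 g1].
  have g0 := fg_g0 _ fg0.
  have dg1 : (1 <= deg g)%N.
    rewrite lt0n; apply/eqP => /deg0_const [] /eqP; by [rewrite (negbTE g0) | rewrite (negbTE g1)].
  have := (H (deg g)); rewrite dg1 deg_max => /(_ isT) /key /(_ g).
  rewrite inE lexx orbT => /(_ isT fg0).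
  move: (deg g) (deg (bfmul f g)) => a b; lia.
Qed.
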